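(* Let $p\geq1$, $\mu>0$, and let $g:\mathbb{R}^n\to\mathbb{R}\cup\{+\infty\}$ be convex. Let $\lambda^{\ast}$ be the optimal solution of $$\min_{\lambda\in\mathbb{R}^n}\Big\{g(\lambda)+\frac{\mu}{1+\frac1p}\lVert\lambda\rVert^{1+\frac1p}\Big\},$$ and suppose $\lambda^{\ast}\neq0$. Let $\lambda^k\in\mathbb{R}^n$ with $\lVert\lambda^k\rVert>0$, set $t^k=\lVert\lambda^k\rVert^{\frac1p-1}$, and let $\lambda^{k+1}=\arg\min_{\lambda\in\mathbb{R}^n}\{g(\lambda)+\frac{\mu}{2}t^k\lVert\lambda\rVert^2\}$. Then $$\big(\lVert\lambda^k\rVert^{1-\frac1p}-\lVert\lambda^{\ast}\rVert^{1-\frac1p}\big)\big(\lVert\lambda^{k+1}\rVert^2-\lVert\lambda^{\ast}\rVert^2\big)\geq0,$$ and $$\big(\lVert\lambda^k\rVert^{1-\frac1p}-\lVert\lambda^{\ast}\rVert^{1-\frac1p}\big)\big(\lVert\lambda^k\rVert^{1-\frac1p}-\lVert\lambda^{k+1}\rVert^{1-\frac1p}\big)\geq0.$$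
   Context: $\lVert\cdot\rVert$ is the Euclidean norm. The minimizers above are assumed to exist. This is one step of the fixed point iteration: given $\lambda^k$, set $t^k=\lVert\lambda^k\rVert^{1/p-1}$ if $\lambda^k\neq0$ and $t^k=0$ otherwise, and $\lambda^{k+1}=\arg\min_\lambda\{g(\lambda)+\frac{\mu}{2}t^k\lVert\lambda\rVert^2\}$. *)

(* Defs.v *)
From mathcomp Require Import all_boot all_order all_algebra.
From mathcomp Require Import all_classical all_reals all_analysis.
Set Implicit Arguments. Unset Strict Implicit. Unset Printing Implicit Defensive.
Import Order.TTheory GRing.Theory Num.Theory.
Local Open Scope ring_scope.

Definition enorm (R : realType) (n : nat) (x : 'rV[R]_n) : R :=
  Num.sqrt (\sum_(i < n) x ord0 i ^+ 2).

(* Convexity of an extended-real valued function R^n -> R u {+oo}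
   (values in \bar R; the no -oo condition is a separate hypothesis). *)
Definition ext_convex (R : realType) (n : nat) (g : 'rV[R]_n -> \bar R) : Prop :=
  forall (x y : 'rV[R]_n) (t : R), 0 <= t -> t <= 1 ->
    (g (t *: x + (1 - t) *: y)%R <= t%:E * g x + (1 - t)%:E * g y)%E.

Definition is_argmin (R : realType) (n : nat) (F : 'rV[R]_n -> \bar R)
  (x : 'rV[R]_n) : Prop :=
  forall y : 'rV[R]_n, (F x <= F y)%E.

(* Main.v *)
Require Import Defs.
From mathcomp Require Import all_boot all_order all_algebra.
From mathcomp Require Import all_classical all_reals all_analysis.
From mathcomp Require Import ring lra.
Import Order.TTheory GRing.Theory Num.Theory.
Local Open Scope ring_scope.

Section H.
Set Implicit Arguments. Unset Strict Implicit.
Variable R : realType.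

Lemma le_lim (u v w : R) : (forall s, 0 < s -> s <= 1 -> u <= v + s * w) -> u <= v.
Proof.
move=> H; case: (lerP u v) => // vu; exfalso.
set d := u - v.
have d0 : 0 < d by rewrite subr_gt0.
have dw0 : 0 < d + `|w| by rewrite ltr_wpDr.
set s := d / (d + `|w|).
have s0 : 0 < s by rewrite divr_gt0.
have s1 : s <= 1 by rewrite ler_pdivrMr // mul1r lerDl.
have := H s s0 s1.
have h1 : s * w <= s * `|w| by rewrite ler_pM2l // ler_norm.
have h2 : s * `|w| < d.
  rewrite /s mulrAC ltr_pdivrMr //.
  by rewrite mulrDr ltrDr mulr_gt0.
rewrite /d in h2; lra.
Qed.

Lemma young_e (X Y e : R) : 0 <= X -> 0 <= Y -> 0 < e -> e < 1 ->
  powR X e * powR Y (1 - e) <= e * X + (1 - e) * Y.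
Proof.
move=> X0 Y0 e0 e1.
have e'0 : 0 < 1 - e by rewrite subr_gt0.
have i0 : 0 < e^-1 by rewrite invr_gt0.
have i1 : 0 < (1 - e)^-1 by rewrite invr_gt0.
have := @conjugate_powR R (powR X e) (powR Y (1 - e)) e^-1 (1 - e)^-1
  (powR_ge0 _ _) (powR_ge0 _ _) i0 i1.
rewrite !invrK addrC subrK => /(_ erefl).
rewrite -!powRrM !mulfV ?gt_eqF // !powRr1 //.
by rewrite [X * e]mulrC [Y * _]mulrC.
Qed.


Lemma tangent_pow (u a q : R) : 0 <= u -> 0 < a -> 0 < q -> q < 1 ->
  powR u (1 + q) <= powR a (1 + q) + (1 + q) / 2 * powR a (q - 1) * (u ^+ 2 - a ^+ 2).
Proof.
move=> u0 a0 q0 q1.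
set e := (1 + q) / 2.
have e0 : 0 < e by rewrite divr_gt0 // addr_gt0.
have e1 : e < 1 by rewrite /e ltr_pdivrMr // mul1r; lra.

have := young_e (sqr_ge0 u) (sqr_ge0 a) e0 e1.
have pe : forall x, 0 <= x -> powR (x ^+ 2) e = powR x (1 + q).
  move=> x x0; rewrite -powR_mulrn // -powRrM; by congr powR; rewrite /e; lra.
have pe' : forall x, 0 <= x -> powR (x ^+ 2) (1 - e) = powR x (1 - q).
  move=> x x0; rewrite -powR_mulrn // -powRrM; by congr powR; rewrite /e; lra.
rewrite pe // pe' ?(ltW a0) //.
have A0 : 0 < powR a (q - 1) by rewrite powR_gt0.
have E1 : powR a (1 - q) * powR a (q - 1) = 1.
  rewrite -powRD; last by apply/implyP => _; rewrite gt_eqF.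
  have -> : 1 - q + (q - 1) = 0 by lra.
  by rewrite powRr0.
have E2 : powR a (1 + q) = powR a (q - 1) * a ^+ 2.
  rewrite -powR_mulrn ?(ltW a0) // -powRD; last by apply/implyP => _; rewrite gt_eqF.
  by congr powR; lra.
move=> H.
have := ler_wpM2r (ltW A0) H.
rewrite -[X in X <= _ -> _]mulrA E1 mulr1 => H2.

apply: (le_trans H2).
rewrite E2 /e. 
set A := powR a (q - 1).
have -> : (1 + q) / 2 * A * (u ^+ 2 - a ^+ 2) = e * A * u^+2 - e * A * a ^+2 by rewrite /e; ring.
rewrite /e; nra.
Qed.


Definition dot n (x y : 'rV[R]_n) := \sum_(i < n) x ord0 i * y ord0 i.

Lemma enorm_ge0 n (x : 'rV[R]_n) : 0 <= enorm x.
Proof. exact: sqrtr_ge0. Qed.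

Lemma enorm_sq n (x : 'rV[R]_n) : enorm x ^+ 2 = dot x x.
Proof.
rewrite /enorm sqr_sqrtr; last by apply: sumr_ge0 => i _; exact: sqr_ge0.
by apply: eq_bigr => i _; rewrite expr2.
Qed.

Lemma dotC n (x y : 'rV[R]_n) : dot x y = dot y x.
Proof. by apply: eq_bigr => i _; rewrite mulrC. Qed.

Lemma enorm_conv n (x y : 'rV[R]_n) s :
  enorm (s *: y + (1 - s) *: x) ^+ 2
  = s ^+ 2 * dot y y + 2 * s * (1 - s) * dot x y + (1 - s) ^+ 2 * dot x x.
Proof.
rewrite enorm_sq /dot !mulr_sumr -!big_split /=.
by apply: eq_bigr => i _; rewrite !mxE; ring.
Qed.

Lemma enorm_eq0 n (x : 'rV[R]_n) : enorm x = 0 -> x = 0.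
Proof.
move=> h.
have h2 : \sum_(i < n) x ord0 i ^+ 2 = 0.
  by move: h; rewrite /enorm => /eqP; rewrite sqrtr_eq0 => h1; apply/eqP;
     rewrite eq_le h1 sumr_ge0 // => i _; exact: sqr_ge0.
have := (psumr_eq0P (fun i _ => sqr_ge0 (x ord0 i)) h2).
move=> hi; apply/matrixP => i j; rewrite ord1 mxE.
by have /eqP := hi j isT; rewrite sqrf_eq0 => /eqP.
Qed.

Lemma dot0l n (y : 'rV[R]_n) : dot 0 y = 0.
Proof. by rewrite /dot big1 // => i _; rewrite mxE mul0r. Qed.

Lemma cauchy_schwarz n (x y : 'rV[R]_n) : dot x y <= enorm x * enorm y.
Proof.
have [a0|a0] := eqVneq (enorm x) 0.
  by rewrite (enorm_eq0 a0) dot0l mulr_ge0 // enorm_ge0.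
have [c0|c0] := eqVneq (enorm y) 0.
  by rewrite (enorm_eq0 c0) dotC dot0l mulr_ge0 // enorm_ge0.
set a := enorm x; set c := enorm y.
have a1 : 0 < a by rewrite lt_neqAle eq_sym a0 enorm_ge0.
have c1 : 0 < c by rewrite lt_neqAle eq_sym c0 enorm_ge0.
have H : 0 <= \sum_(i < n) (c * x ord0 i - a * y ord0 i) ^+ 2.
  by apply: sumr_ge0 => i _; exact: sqr_ge0.
have E : \sum_(i < n) (c * x ord0 i - a * y ord0 i) ^+ 2
   = c ^+ 2 * dot x x - 2 * c * a * dot x y + a ^+ 2 * dot y y.
  rewrite /dot !mulr_sumr -sumrN -!big_split /=.
  by apply: eq_bigr => i _; ring.
rewrite E -!enorm_sq -/a -/c in H.
have ac0 : 0 < a * c by rewrite mulr_gt0.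
nra.
Qed.

Lemma le_lim' (u v w : R) : (forall s, 0 < s -> s <= 1 -> u <= v + s * w) -> u <= v.
Proof. exact: le_lim. Qed.

Lemma var_ineq n (G : 'rV[R]_n -> \bar R) (phi : R -> R) (beta : R)
  (x y : 'rV[R]_n) (gx gy : R) :
  ext_convex G -> G x = gx%:E -> G y = gy%:E ->
  is_argmin (fun l => (G l + (phi (enorm l))%:E)%E) x ->
  (forall s, 0 < s -> s <= 1 ->
     phi (enorm (s *: y + (1 - s) *: x)) <=
     phi (enorm x) + beta * (enorm (s *: y + (1 - s) *: x) ^+ 2 - enorm x ^+ 2)) ->
  gx - gy <= 2 * beta * (dot x y - dot x x).
Proof.
move=> Gc Gx Gy Hm Hphi.
apply: (@le_lim _ _ (beta * (dot y y - 2 * dot x y + dot x x))) => s s0 s1.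
set z := s *: y + (1 - s) *: x.
have H1 := Hm z.
have H2 := Gc y x s (ltW s0) s1.
rewrite -/z Gx Gy -!EFinM -EFinD in H2.
have H3 : ((gx + phi (enorm x))%:E <= (s * gy + (1 - s) * gx + phi (enorm z))%:E)%E.
  rewrite EFinD -Gx; apply: (le_trans H1); rewrite EFinD; exact: leeD2r.
rewrite lee_fin in H3.
have H4 := Hphi s s0 s1.
rewrite -/z enorm_conv enorm_sq in H4.
rewrite -(ler_pM2l s0).
nra.
Qed.

Lemma argmin_fin n (g : 'rV[R]_n -> \bar R) (h : 'rV[R]_n -> R) y :
  (forall x, g x != -oo%E) -> (exists x, g x != +oo%E) ->
  is_argmin (fun l => (g l + (h l)%:E)%E) y -> g y \is a fin_num.
Proof.
move=> Hn [x0 Hx0] Hm; rewrite fin_numE Hn /=.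
apply/negP => /eqP Hy.
have := Hm x0; rewrite /= Hy addye // leye_eq.
by move: Hx0 (Hn x0); case: (g x0).
Qed.

End H.
Unset Implicit Arguments. Set Strict Implicit.

Lemma scaled_tangent (R : realType) (mu u a q : R) : 0 < mu -> 0 <= u -> 0 < a -> 0 < q -> q < 1 ->
  mu / (1 + q) * powR u (1 + q) <=
  mu / (1 + q) * powR a (1 + q) + mu / 2 * powR a (q - 1) * (u ^+ 2 - a ^+ 2).
Proof.
move=> mu0 u0 a0 q0 q1.
have k0 : 0 <= mu / (1 + q) by rewrite divr_ge0 // ?ltW // addr_gt0.
have := ler_wpM2l k0 (tangent_pow u0 a0 q0 q1).
move=> H; apply: (le_trans H); rewrite le_eqVlt; apply/orP; left; apply/eqP.
field; rewrite gt_eqF // addr_gt0 //.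
Qed.

Lemma inv_aux (R : realType) (A T x y : R) : 0 < x -> x < y -> 0 < A -> 0 < T ->
  A * x = 1 -> T * y = 1 -> T < A.
Proof. move=> *; nra. Qed.

Lemma sq_aux (R : realType) (x y : R) : 0 <= y -> 0 < x -> 0 <= y ^+ 2 - x ^+ 2 -> x <= y.
Proof. move=> *; nra. Qed.

Lemma sign_aux (R : realType) (u v : R) : u < 0 -> 0 <= u * v -> v <= 0.
Proof. move=> *; nra. Qed.

Lemma sign_aux' (R : realType) (u v : R) : 0 < u -> 0 <= u * v -> 0 <= v.
Proof. move=> *; nra. Qed.

Theorem lemma4p4 (R : realType) (n : nat) (p mu : R)
  (g : 'rV[R]_n -> \bar R) (lstar lk lk1 : 'rV[R]_n) :
  1 <= p -> 0 < mu ->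
  ext_convex g ->
  (forall x, g x != -oo%E) ->
  (exists x, g x != +oo%E) ->
  is_argmin (fun l => (g l + (mu / (1 + p^-1) * powR (enorm l) (1 + p^-1))%:E)%E)
    lstar ->
  lstar != 0 ->
  0 < enorm lk ->
  is_argmin (fun l => (g l + (mu / 2 * powR (enorm lk) (p^-1 - 1)
                                * enorm l ^+ 2)%:E)%E) lk1 ->
  0 <= (powR (enorm lk) (1 - p^-1) - powR (enorm lstar) (1 - p^-1))
       * (enorm lk1 ^+ 2 - enorm lstar ^+ 2)
  /\
  0 <= (powR (enorm lk) (1 - p^-1) - powR (enorm lstar) (1 - p^-1))
       * (powR (enorm lk) (1 - p^-1) - powR (enorm lk1) (1 - p^-1)).
Proof.
move=> p1 mu0 gc gninf gex Hstar ls0 lk0 Hk1.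
have p0 : 0 < p by apply: (lt_le_trans ltr01 p1).
set q := p^-1 in Hstar Hk1 *.
have q0 : 0 < q by rewrite invr_gt0.
have q1 : q <= 1 by rewrite invf_le1.
have [q_1|qn1] := eqVneq q 1.
  by rewrite q_1 subrr !powRr0 !subrr !mul0r.
have q1' : q < 1 by rewrite lt_neqAle qn1.
have r0 : 0 < 1 - q by rewrite subr_gt0.
set a := enorm lstar in Hstar *; set b := enorm lk in lk0 Hk1 *; set c := enorm lk1.
have a0 : 0 < a.
  rewrite lt_neqAle enorm_ge0 andbT eq_sym; apply/eqP => /enorm_eq0 h.
  by rewrite h eqxx in ls0.
have c0 : 0 <= c by exact: enorm_ge0.
have Fy := argmin_fin (h := fun l => mu / (1 + q) * powR (enorm l) (1 + q)) gninf gex Hstar.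
have Fx := argmin_fin (h := fun l => mu / 2 * powR b (q - 1) * enorm l ^+ 2) gninf gex Hk1.
set gy := fine (g lstar); set gx := fine (g lk1).
have Gy : g lstar = gy%:E by rewrite fineK.
have Gx : g lk1 = gx%:E by rewrite fineK.
set A := powR a (q - 1); set T := powR b (q - 1).
have A0 : 0 < A by rewrite powR_gt0.
have T0 : 0 < T by rewrite powR_gt0.
have F1 : gy + mu / (1 + q) * powR a (1 + q) <= gx + mu / (1 + q) * powR c (1 + q).
  by have := Hstar lk1; rewrite /= Gy Gx -!EFinD lee_fin.
have F2 : gx + mu / 2 * T * c ^+ 2 <= gy + mu / 2 * T * a ^+ 2.
  by have := Hk1 lstar; rewrite /= Gy Gx -!EFinD lee_fin.
have Yc := @scaled_tangent R mu c a q mu0 c0 a0 q0 q1'.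
have H1 : (T - A) * (c ^+ 2 - a ^+ 2) <= 0.
  have : mu / 2 * ((T - A) * (c ^+ 2 - a ^+ 2)) <= 0.
    rewrite -/A in Yc. lra.
  by rewrite pmulr_rle0 // divr_gt0.
set D := dot lk1 lstar.
have V1 : gx - gy <= 2 * (mu / 2 * T) * (D - c ^+ 2).
  rewrite /c enorm_sq.
  apply: (var_ineq (phi := fun u => mu / 2 * T * u ^+ 2) (beta := mu / 2 * T) gc Gx Gy Hk1).
  move=> s _ _ /=; lra.
have V2 : gy - gx <= 2 * (mu / 2 * A) * (D - a ^+ 2).
  rewrite /D dotC /a enorm_sq.
  apply: (var_ineq (phi := fun u => mu / (1 + q) * powR u (1 + q)) (beta := mu / 2 * A)
     gc Gy Gx Hstar).
  move=> s _ _ /=; exact: (@scaled_tangent R mu _ a q mu0 (enorm_ge0 _) a0 q0 q1').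
have CS : D <= c * a by exact: cauchy_schwarz.
have H2 : 0 <= (a - c) * (T * c - A * a).
  have h : 0 <= T * (D - c ^+ 2) + A * (D - a ^+ 2).
    have : 0 <= mu * (T * (D - c ^+ 2) + A * (D - a ^+ 2)) by lra.
    by rewrite pmulr_rge0.
  have TA : 0 < T + A by rewrite addr_gt0.
  nra.
have powlt : forall e x y : R, 0 < e -> 0 <= x -> x < y -> powR x e < powR y e.
  move=> e x y e0 x0 xy; apply: gt0_ltr_powR => //; rewrite nnegrE //.
  exact: ltW (le_lt_trans x0 xy).
have powle : forall e x y : R, 0 <= e -> 0 <= x -> x <= y -> powR x e <= powR y e.
  move=> e x y e0 x0 xy; apply: ge0_ler_powR => //; rewrite nnegrE //.
  exact: le_trans x0 xy.
have Aa : A * a = powR a q by rewrite mulrC mulr_powRB1 // ltW.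
have Tb : T * b = powR b q by rewrite mulrC mulr_powRB1 // ltW.
have inv1 : forall x, 0 < x -> powR x (q - 1) * powR x (1 - q) = 1.
  move=> x x0; rewrite -powRD; last by apply/implyP => _; rewrite gt_eqF.
  have -> : q - 1 + (1 - q) = 0 by lra.
  by rewrite powRr0.
have IA := inv1 a a0; have IT := inv1 b lk0.
rewrite -/A in IA; rewrite -/T in IT.
have ar0 : 0 < powR a (1 - q) by rewrite powR_gt0.
have br0 : 0 < powR b (1 - q) by rewrite powR_gt0.
have [ab|ab|ab] := ltgtP a b.
- have arbr := powlt _ _ _ r0 (ltW a0) ab.
  have bqaq := powlt _ _ _ q0 (ltW a0) ab.
  have TA : T < A := inv_aux _ _ _ _ _ ar0 arbr A0 T0 IA IT.
  have ca2 : 0 <= c ^+ 2 - a ^+ 2.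
    have h : 0 <= (A - T) * (c ^+ 2 - a ^+ 2) by rewrite -opprB mulNr oppr_ge0.
    by move: h; rewrite pmulr_rge0 // subr_gt0.
  have ac : a <= c := sq_aux _ _ _ c0 a0 ca2.
  have cb : c <= b.
    rewrite leNgt; apply/negP => bc.
    have h : T * b < T * c by rewrite ltr_pM2l.
    have h2 : a - c < 0 by rewrite subr_lt0; apply: (lt_trans ab bc).
    have h3 : T * c <= powR a q by rewrite -Aa -subr_le0; exact: sign_aux _ _ _ h2 H2.
    have := le_lt_trans h3 bqaq; rewrite -Tb => h4.
    by have := lt_trans h4 h; rewrite ltxx.
  have := powle _ _ _ (ltW r0) c0 cb.
  move=> h; split; apply: mulr_ge0; rewrite ?ca2 // subr_ge0 ?(ltW arbr) //.
- have arbr := powlt _ _ _ r0 (ltW lk0) ab.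
  have bqaq := powlt _ _ _ q0 (ltW lk0) ab.
  have TA : A < T := inv_aux _ _ _ _ _ br0 arbr T0 A0 IT IA.
  have ca2 : 0 <= a ^+ 2 - c ^+ 2.
    have h : 0 <= (T - A) * (a ^+ 2 - c ^+ 2) by rewrite -[a ^+ 2 - _]opprB mulrN oppr_ge0.
    by move: h; rewrite pmulr_rge0 // subr_gt0.
  have cb : b <= c.
    rewrite leNgt; apply/negP => bc.
    have h : T * c < T * b by rewrite ltr_pM2l.
    have h2 : 0 < a - c by rewrite subr_gt0; apply: (lt_trans bc ab).
    have h3 : powR a q <= T * c by rewrite -Aa -subr_ge0; exact: sign_aux' _ _ _ h2 H2.
    have := lt_le_trans bqaq h3; rewrite -Tb => h4.
    by have := lt_trans h h4; rewrite ltxx.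
  have := powle _ _ _ (ltW r0) (ltW lk0) cb.
  move=> h; split; apply: mulr_le0; rewrite ?subr_le0 ?(ltW arbr) //.
  by rewrite -subr_ge0.
- by rewrite ab subrr !mul0r.
Qed.
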